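(* For all $n\ge0$, $$r_n=2^n+\sum_{k=1}^{n-1}2^k\,c(n,k),$$ where $c(n,k)$ denotes the number of Young diagrams fitting in the staircase shape $(n,n-1,\dots,1)$ that have exactly $k$ corners $(i,j)$ with $i+j<n+1$.
   Context: The (large) Schröder numbers are defined by $r_0=1$ and $r_n=r_{n-1}+\sum_{i=0}^{n-1}r_ir_{n-1-i}$ for $n\ge1$. Young diagrams are in English notation: the diagram of a partition $\lambda$ is the set of cells $(i,j)$ with $1\le j\le\lambda_i$; it fits in $(n,n-1,\dots,1)$ if $\lambda_i\le n+1-i$ for all $i$. A corner is a cell $(i,j)$ of the diagram such that neither $(i+1,j)$ nor $(i,j+1)$ belongs to the diagram. (For $n=0$ and $n=1$ the sum is empty.) *)

(* Defs.v *)
From mathcomp Require Import all_boot.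
Set Implicit Arguments. Unset Strict Implicit. Unset Printing Implicit Defensive.

(* Large Schroeder numbers: r_0 = 1, r_n = r_{n-1} + sum_{i=0}^{n-1} r_i r_{n-1-i}.
   schroeder_seq n = [:: r_0; ...; r_n]. *)
Fixpoint schroeder_seq (n : nat) : seq nat :=
  match n with
  | 0 => [:: 1]
  | m.+1 => let s := schroeder_seq m in
            rcons s (nth 0 s m + \sum_(i < m.+1) nth 0 s i * nth 0 s (m - i))
  end.

Definition schroeder (n : nat) : nat := nth 0 (schroeder_seq n) n.

(* A partition fitting in the staircase (n, n-1, ..., 1) is given by its
   first n parts lam_1 >= ... >= lam_n (all further parts are 0, since
   lam_{n+1} <= 0).  We encode it as f : {ffun 'I_n -> 'I_n.+1}, with
   f i = lam_{i+1}. *)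
Definition fits_staircase (n : nat) (f : {ffun 'I_n -> 'I_n.+1}) : bool :=
  [forall i : 'I_n, forall j : 'I_n, (i <= j) ==> (f j <= f i)] &&
  [forall i : 'I_n, f i <= n - i].

(* lam_i for 1-indexed rows i (0 outside 1..n). *)
Definition part (n : nat) (f : {ffun 'I_n -> 'I_n.+1}) (i : nat) : nat :=
  if i is i'.+1 then (if insub i' is Some k then val (f k) else 0) else 0.

(* Cell (i,j) (1-indexed, English notation) belongs to the diagram. *)
Definition in_diagram n (f : {ffun 'I_n -> 'I_n.+1}) (i j : nat) : bool :=
  [&& 1 <= i, 1 <= j & j <= part f i].

Definition is_corner n (f : {ffun 'I_n -> 'I_n.+1}) (i j : nat) : bool :=
  [&& in_diagram f i j, ~~ in_diagram f i.+1 j & ~~ in_diagram f i j.+1].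

(* Number of corners (i,j) with i + j < n + 1.  All cells of a diagram
   fitting in the staircase have 1 <= i, j <= n. *)
Definition low_corners n (f : {ffun 'I_n -> 'I_n.+1}) : nat :=
  \sum_(i <- iota 1 n) \sum_(j <- iota 1 n) ((is_corner f i j) && (i + j < n + 1)).

Definition c_count (n k : nat) : nat :=
  #|[set f : {ffun 'I_n -> 'I_n.+1} | fits_staircase f && (low_corners f == k)]|.

(* Main.v *)
Require Import Defs.
From mathcomp Require Import all_boot zify.
Set Implicit Arguments. Unset Strict Implicit. Unset Printing Implicit Defensive.

Fixpoint stair (n : nat) : seq (seq nat) :=
  match n with
  | 0 => [:: [::]]
  | n'.+1 => [seq v :: s | s <- stair n', v <- iota (nth 0 s 0) (n'.+2 - nth 0 s 0)]
  end.

Definition goodP n (s : seq nat) :=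
  [/\ size s = n, (forall i j, i <= j -> nth 0 s j <= nth 0 s i) & (forall i, nth 0 s i <= n - i)].

Lemma goodP_cons n v s : goodP n.+1 (v :: s) <-> goodP n s /\ nth 0 s 0 <= v <= n.+1.
Proof.
split.
- case=> [[sz] mono bnd]; split; last first.
    by rewrite (mono 0 1 isT) (bnd 0).
  split=> // [i j lij|i]; first by apply: (mono i.+1 j.+1).
  by have := bnd i.+1; rewrite subSS.
- case=> [[sz mono bnd] /andP[hv vn]]; split; first by rewrite /= sz.
  + case=> [|i] [|j] //= lij.
    by apply: leq_trans (mono 0 j isT) hv.
    by apply: mono.
  + by case=> [|i] //=; rewrite subSS.
Qed.

Lemma goodP0 s : goodP 0 s <-> s = [::].
Proof.
split; first by case=> /size0nil.
by move=> ->; split=> // [i j _|i]; rewrite nth_nil.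
Qed.

Lemma stairP n s : s \in stair n <-> goodP n s.
Proof.
elim: n s => [|n IH] s.
  rewrite inE; split; first by move/eqP->; apply/goodP0.
  by move/goodP0->.
split.
- move=> /allpairsPdep [t [v [ts vt ->]]].
  apply/goodP_cons; split; first by apply/IH.
  have [_ _ /(_ 0)] := (IH t).1 ts; rewrite subn0 => b.
  move: vt; rewrite mem_iota => /andP[h1 h2]; rewrite h1 /=.
  by rewrite subnKC in h2 => //; rewrite (leq_trans b) // ltnW.
- case: s => [|v s]; first by case.
  move/goodP_cons => [gs hv]; apply/allpairsPdep; exists s, v; split=> //.
  + by apply/IH.
  + rewrite mem_iota; case/andP: hv => -> /=; rewrite subnKC //.
    by case: gs => _ _ /(_ 0); rewrite subn0 => b; rewrite (leq_trans b) // ltnW.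
Qed.

Lemma stair_uniq n : uniq (stair n).
Proof.
elim: n => [|n IH] //=.
apply: allpairs_uniq_dep => //.
  by move=> s _; apply: iota_uniq.
by move=> [a x] [b y] _ _ /= [-> ->].
Qed.

Definition lcs n (s : seq nat) : nat :=
  \sum_(i <- iota 1 n) ((nth 0 s i < nth 0 s i.-1) && (i + nth 0 s i.-1 < n + 1)).

Lemma lcs_cons n v s :
  lcs n.+1 (v :: s) = ((nth 0 s 0 < v) && (v < n.+1)) + lcs n s.
Proof.
rewrite /lcs /= big_cons /= add1n addn1 ltnS; congr (_ + _).
rewrite -[2]/(1 + 1) iotaDl big_map; apply: eq_big_seq => i.
rewrite mem_iota => /andP[i1 _]; case: i i1 => [|i] // _.
by rewrite !add1n /= addSn ltnS addn1.
Qed.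

Lemma sum_iota_eq a m p (g : nat -> nat) :
  \sum_(j <- iota a m) ((j == p) * g j) = (a <= p < a + m) * g p.
Proof.
elim: m a => [|m IH] a; first by rewrite big_nil addn0; case: leqP => //= /ltnW ->.
rewrite /= big_cons IH; case: (ltngtP a p) => [ap|pa|<-].
- by rewrite addSnnS.
- by [].
- by rewrite addSn ltnS leq_addr addnS ltnS leq_addr /= mul0n addn0.
Qed.

Definition W x n v := \sum_(s <- stair n) x ^ lcs n s * (nth 0 s 0 == v).
Definition Q x n v := \sum_(s <- stair n) x ^ lcs n s * (nth 0 s 0 < v).
Definition S x n := \sum_(s <- stair n) x ^ lcs n s.

Lemma head_le n s : s \in stair n -> nth 0 s 0 <= n.
Proof. by move/stairP => [_ _ /(_ 0)]; rewrite subn0. Qed.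

Lemma sum_stairS n (F : seq nat -> nat) :
  \sum_(s <- stair n.+1) F s =
  \sum_(s <- stair n) \sum_(w <- iota (nth 0 s 0) (n.+2 - nth 0 s 0)) F (w :: s).
Proof. by rewrite /= big_allpairs_dep. Qed.

Lemma inner_eq x n v s : s \in stair n ->
  \sum_(w <- iota (nth 0 s 0) (n.+2 - nth 0 s 0)) x ^ lcs n.+1 (w :: s) * (w == v)
  = x ^ lcs n s * (if v <= n then (nth 0 s 0 == v) + x * (nth 0 s 0 < v) else (v == n.+1)).
Proof.
move=> sS; have hn := head_le sS.
under eq_bigr => w _ do rewrite mulnC lcs_cons expnD.
rewrite sum_iota_eq /= subnKC; last by rewrite (leq_trans hn) // ltnW.
set h := nth 0 s 0.
case: (leqP v n) => vn.
- have v2 : v < n.+2 by rewrite ltnS ltnW.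
  have v1 : v < n.+1 by [].
  rewrite v2 v1 !andbT.
  by case: (ltngtP h v) => hv /=; rewrite !(mul1n, mul0n, muln0, muln1, add0n, addn0, expn0, expn1) // mulnC.
- case: (ltngtP v n.+1) => v1.
  + by rewrite ltnNge vn in v1.
  + by rewrite (ltnNge v) v1 /= andbF mul0n muln0.
  + rewrite v1 andbF ltnSn andbT (leq_trans hn (leqnSn n)) /=.
    by rewrite !(mul1n, mul0n, muln0, muln1, add0n, addn0, expn0, expn1) // mulnC.
Qed.

Lemma W_rec x n v : v <= n -> W x n.+1 v = W x n v + x * Q x n v.
Proof.
move=> vn; rewrite /W sum_stairS /Q big_distrr -big_split /=.
apply: eq_big_seq => s sS; rewrite /= inner_eq // vn mulnDr; congr (_ + _).
by rewrite mulnCA.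
Qed.

Lemma W_top x n : W x n.+1 n.+1 = S x n.
Proof.
rewrite /W sum_stairS /S; apply: eq_big_seq => s sS.
by rewrite inner_eq // ltnn eqxx muln1.
Qed.

Lemma Q_S x n v : Q x n v.+1 = Q x n v + W x n v.
Proof.
rewrite /Q /W -big_split /=; apply: eq_bigr => s _.
by rewrite -mulnDr ltnS leq_eqVlt; congr (_ * _); case: ltngtP.
Qed.

Lemma Q0 x n : Q x n 0 = 0.
Proof. by rewrite /Q big1 // => s _; rewrite ltn0 muln0. Qed.

Lemma Q_top x n : Q x n n.+1 = S x n.
Proof.
rewrite /Q /S; apply: eq_big_seq => s sS.
by rewrite ltnS head_le // muln1.
Qed.

Lemma W00 x : W x 0 0 = 1.
Proof. by rewrite /W /= big_cons big_nil /lcs /= big_nil. Qed.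

Definition a n k := Q 2 n k.+1.

Lemma W_0 x n : W x n 0 = 1.
Proof. elim: n => [|n IH]; first exact: W00. by rewrite W_rec // Q0 muln0 addn0. Qed.

Lemma a_0 n : a n 0 = 1.
Proof. by rewrite /a Q_S Q0 W_0. Qed.

Lemma a_R2 n k : k.+1 <= n -> a n.+1 k.+1 = a n.+1 k + a n k.+1 + a n k.
Proof.
move=> kn; rewrite /a Q_S W_rec // (Q_S 2 n k.+1) -!addnA; congr (_ + _).
lia.
Qed.

Lemma a_R3 n : a n.+1 n.+1 = a n.+1 n + a n n.
Proof. by rewrite /a Q_S W_top Q_top. Qed.

Lemma a_L n k : k <= n -> a n.+1 k = \sum_(j < k.+1) a j j * a (n - j) (k - j).
Proof.
elim: n k => [|n IHn] k.
  rewrite leqn0 => /eqP ->; by rewrite big_ord_recl big_ord0 !a_0.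
elim: k => [|k IHk] kn.
  by rewrite big_ord_recl big_ord0 !a_0.
have kn' : k <= n by [].
rewrite big_ord_recr /= subnn subSS a_0 muln1.
rewrite a_R2 //.
have E : forall j : 'I_k.+1, n.+1 - j = (n - j).+1 /\ k.+1 - j = (k - j).+1.
  by move=> j; have := ltn_ord j; split; rewrite subSn //; lia.
case: (ltngtP k n) => kn2; last 1 first.
-
  subst k.
  under eq_bigr => j _ do rewrite (E j).1 a_R3 mulnDr.
  rewrite big_split /= -(IHn n (leqnn n)).
  have -> : \sum_(i < n.+1) a i i * a (n - i).+1 (n - i) = a n.+2 n.
    by rewrite (IHk (leqnSn n)); apply: eq_bigr => j _; rewrite -(E j).1.
  by rewrite a_R3; lia.
- have F : forall j : 'I_k.+1, a j j * a (n.+1 - j) (k.+1 - j) =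
     a j j * a (n.+1 - j) (k - j) + a j j * a (n - j) (k.+1 - j) + a j j * a (n - j) (k - j).
    move=> j; have jk := ltn_ord j.
    rewrite (E j).1 (E j).2 a_R2; last by lia.
    by rewrite -(E j).1 -(E j).2 !mulnDr.
  rewrite (eq_bigr _ (fun j _ => F j)) !big_split /=.
  rewrite -(IHk (ltnW kn)) -(IHn k kn').
  rewrite (IHn k.+1 kn2) big_ord_recr /= subnn a_0 muln1.
  lia.
- lia.
Qed.

Lemma size_schroeder_seq n : size (schroeder_seq n) = n.+1.
Proof. by elim: n => //= n IH; rewrite size_rcons IH. Qed.

Lemma schroeder_nth n i : i <= n -> nth 0 (schroeder_seq n) i = schroeder i.
Proof.
elim: n i => [|n IH] i.
  by rewrite leqn0 => /eqP ->.
rewrite leq_eqVlt => /orP[/eqP -> //|iin].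
by rewrite /= nth_rcons size_schroeder_seq iin IH.
Qed.

Lemma schroeder_rec n :
  schroeder n.+1 = schroeder n + \sum_(i < n.+1) schroeder i * schroeder (n - i).
Proof.
rewrite /schroeder /= nth_rcons size_schroeder_seq ltnn eqxx.
rewrite schroeder_nth //; congr (_ + _); apply: eq_bigr => i _.
by rewrite !schroeder_nth // ?leq_subr // -ltnS.
Qed.

Lemma a_diag n : a n n = schroeder n.
Proof.
elim: n {-2}n (leqnn n) => [|n IH] m mn.
  by move: mn; rewrite leqn0 => /eqP ->; rewrite a_0.
rewrite leq_eqVlt in mn; case/orP: mn => [/eqP ->|mn]; last exact: IH.
rewrite a_R3 a_L // schroeder_rec IH // addnC; congr (_ + _).
apply: eq_bigr => i _; have := ltn_ord i => ilt.
by rewrite !IH // ?leq_subr // -ltnS.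
Qed.

Lemma S2 n : S 2 n = schroeder n.
Proof. by rewrite -Q_top -a_diag. Qed.

Lemma Q0shift n v : v <= n.+1 -> Q 0 n.+1 v = Q 0 n v.
Proof.
elim: v => [|v IH] vn; first by rewrite !Q0.
by rewrite !Q_S IH ?(ltnW vn) // W_rec // mul0n addn0.
Qed.

Lemma S0 n : S 0 n = 2 ^ n.
Proof.
elim: n => [|n IH]; first by rewrite -Q_top Q_S Q0 W_0.
by rewrite -Q_top Q_S W_top Q0shift // Q_top IH expnS mul2n addnn.
Qed.

Definition seqof n (f : {ffun 'I_n -> 'I_n.+1}) : seq nat := [seq val (f i) | i <- enum 'I_n].

Lemma size_seqof n f : size (@seqof n f) = n.
Proof. by rewrite size_map size_enum_ord. Qed.

Lemma nth_seqof n f (i : 'I_n) : nth 0 (@seqof n f) i = f i.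
Proof. by rewrite (nth_map i) ?size_enum_ord // nth_ord_enum. Qed.

Lemma nth_seqof_ge n f i : n <= i -> nth 0 (@seqof n f) i = 0.
Proof. by move=> ni; rewrite nth_default // size_seqof. Qed.

Lemma part_nth n f i : part f i.+1 = nth 0 (@seqof n f) i.
Proof.
rewrite /part; case: insubP => [k _ <-|]; first by rewrite nth_seqof.
by rewrite -leqNgt => ?; rewrite nth_seqof_ge.
Qed.

Lemma nth_seqof_le n f i : nth 0 (@seqof n f) i <= n.
Proof.
case: (ltnP i n) => [lt|ge]; last by rewrite nth_seqof_ge.
by rewrite -[i]/(val (Ordinal lt)) nth_seqof -ltnS ltn_ord.
Qed.

Lemma fitsP n f : fits_staircase f <-> goodP n (@seqof n f).
Proof.
split.
- case/andP => /forallP mono /forallP bnd; split.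
  + exact: size_seqof.
  + move=> i j ij; case: (ltnP j n) => [jn|jn]; last by rewrite nth_seqof_ge.
    have iin : i < n by apply: leq_ltn_trans jn.
    rewrite -[i]/(val (Ordinal iin)) -[j]/(val (Ordinal jn)) !nth_seqof.
    by have /forallP /(_ (Ordinal jn)) := mono (Ordinal iin); rewrite ij.
  + move=> i; case: (ltnP i n) => [lt|ge]; last by rewrite nth_seqof_ge.
    by rewrite -[i]/(val (Ordinal lt)) nth_seqof; apply: bnd.
- case=> _ mono bnd; apply/andP; split.
  + apply/forallP => i; apply/forallP => j; apply/implyP => ij.
    by have := mono i j ij; rewrite !nth_seqof.
  + by apply/forallP => i; have := bnd i; rewrite nth_seqof.
Qed.

Lemma seqof_inj n : injective (@seqof n).
Proof.
move=> f g e; apply/ffunP => i; apply: ord_inj.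
by rewrite -!nth_seqof e.
Qed.

Lemma seqof_surj n s : goodP n s -> exists f, @seqof n f = s.
Proof.
case=> sz _ bnd.
exists [ffun i : 'I_n => inord (nth 0 s i) : 'I_n.+1].
apply: (@eq_from_nth _ 0); first by rewrite size_seqof sz.
move=> i; rewrite size_seqof => lt.
rewrite -[i]/(val (Ordinal lt)) nth_seqof ffunE /= inordK //.
by rewrite ltnS (leq_trans (bnd i)) // leq_subr.
Qed.

Lemma sum_transfer n (F : seq nat -> nat) :
  \sum_(f : {ffun 'I_n -> 'I_n.+1} | fits_staircase f) F (seqof f) = \sum_(s <- stair n) F s.
Proof.
transitivity (\sum_(s <- [seq @seqof n f | f <- [seq f <- index_enum {ffun 'I_n -> 'I_n.+1} | fits_staircase f]]) F s).
  by rewrite big_map big_filter.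
apply: perm_big; apply: uniq_perm.
- rewrite map_inj_uniq; last exact: seqof_inj.
  by apply: filter_uniq; apply: index_enum_uniq.
- exact: stair_uniq.
- move=> s; apply/idP/idP.
  + case/mapP => f; rewrite mem_filter => /andP[ff _] ->.
    by apply/stairP; apply/fitsP.
  + move/stairP => gs; have [f ef] := seqof_surj gs.
    apply/mapP; exists f => //; rewrite mem_filter mem_index_enum andbT.
    by apply/fitsP; rewrite ef.
Qed.

Lemma low_corners_lcs n f : low_corners f = lcs n (@seqof n f).
Proof.
rewrite /low_corners /lcs; apply: eq_big_seq => i; rewrite mem_iota => /andP[i1 _].
case: i i1 => [|i] // _ /=.
set p := nth 0 (seqof f) i; set q := nth 0 (seqof f) i.+1.
have pn : p <= n by apply: nth_seqof_le.
transitivity (\sum_(j <- iota 1 n) ((j == p) * ((q < p) && (i.+1 + p < n + 1)))).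
  apply: eq_big_seq => j; rewrite mem_iota => /andP[j1 _].
  rewrite /is_corner /in_diagram !part_nth -/p -/q /= j1 /=.
  case: (ltngtP j p) => [jp|pj|<-] /=.
  - by rewrite andbF.
  - by [].
  - by rewrite andbT -ltnNge mul1n.
rewrite (sum_iota_eq 1 n p (fun _ => nat_of_bool ((q < p) && (i.+1 + p < n + 1)))).
clearbody p q; case: p pn => [|p] pn; first by rewrite ltn0 muln0.
have h : p.+1 < n.+1 := pn. by rewrite add1n h mul1n.
Qed.

Lemma sum_bool_le (r : seq nat) (P : nat -> bool) : \sum_(i <- r) P i <= size r.
Proof.
elim: r => [|x r IH]; first by rewrite big_nil.
by rewrite big_cons /=; case: (P x) => //; rewrite add0n (leq_trans IH).
Qed.

Lemma lcs_lt n s : lcs n.+1 s < n.+1.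
Proof.
rewrite /lcs; have -> : iota 1 n.+1 = iota 1 n ++ [:: n.+1].
  by have := iotaD 1 n 1; rewrite addn1 add1n.
rewrite big_cat /= big_cons big_nil.
have -> : (nth 0 s n.+1 < nth 0 s n.+1.-1) && (n.+1 + nth 0 s n.+1.-1 < n.+1 + 1) = false.
  by case: (nth 0 s n) => [|m]; [rewrite ltn0 | rewrite andbC; apply/negbTE; lia].
by rewrite !addn0 ltnS (leq_trans (sum_bool_le _ _)) // size_iota.
Qed.

Theorem corollary2p10 (n : nat) :
  schroeder n = 2 ^ n + \sum_(1 <= k < n) 2 ^ k * c_count n k.
Proof.
case: n => [|n]; first by rewrite big_geq.
have key : forall x, \sum_(f : {ffun 'I_n.+1 -> 'I_n.+2} | fits_staircase f)
    x ^ low_corners f = S x n.+1.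
  move=> x; rewrite /S -(sum_transfer n.+1 (fun s => x ^ lcs n.+1 s)).
  by apply: eq_bigr => f _; rewrite low_corners_lcs.
have cc : forall k, c_count n.+1 k =
    \sum_(f : {ffun 'I_n.+1 -> 'I_n.+2} | fits_staircase f) (low_corners f == k).
  move=> k; rewrite /c_count cardsE -sum1_card [RHS]big_mkcond [LHS]big_mkcond /=.
  by apply: eq_bigr => f _; rewrite unfold_in /=; case: fits_staircase; case: (_ == _).
rewrite -S2 -key -S0 -key.
have -> : \sum_(f : {ffun 'I_n.+1 -> 'I_n.+2} | fits_staircase f) 0 ^ low_corners f
    = 2 ^ 0 * c_count n.+1 0.
  rewrite cc expn0 mul1n; apply: eq_bigr => f _.
  by case: (low_corners f) => [|m] //; rewrite exp0n.
transitivity (\sum_(0 <= k < n.+1) 2 ^ k * c_count n.+1 k); last by rewrite big_ltn.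
under eq_bigr => k _ do rewrite cc big_distrr.
rewrite exchange_big /=; apply: eq_bigr => f _.
transitivity (\sum_(0 <= k < n.+1) ((k == low_corners f) * 2 ^ k)).
  rewrite /index_iota subn0 sum_iota_eq /= add0n.
  by rewrite low_corners_lcs lcs_lt mul1n.
by apply: eq_bigr => k _; rewrite mulnC eq_sym.
Qed.
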